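(* Let $G=(V,E)$ be an infinite, connected graph with finite maximum degree, Cheeger constant $C_G$ and contour constant $R_G$. Then $$R_G\ge \frac{C_G}{C_G+1}.$$ In particular, $R_G>0$ whenever $C_G>0$.
   Context: For $W\subset V$: $\partial_e W=\{e\in E: |e\cap W|=1\}$, $\partial^{\rm ext}_v W=\{x\in V\setminus W: d_G(x,W)=1\}$, $E[W]$ the edges with both endpoints in $W$. $\mathcal{A}_G$ is the set of nonempty finite $W\subset V$ with $G[W]$ connected. Cheeger constant: $C_G=\inf_{W\in\mathcal{A}_G}|\partial_eW|/|W|$. For $W\in\mathcal{A}_G$, $d^{\rm t}_G(\partial_e W)$ is the minimum number of edges of a tree subgraph of $(W\cup\partial^{\rm ext}_vW,\ E[W]\cup\partial_eW)$ whose edge set contains $\partial_eW$; $R_G=\inf_{W\in\mathcal{A}_G}|\partial_eW|/d^{\rm t}_G(\partial_eW)$. *)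

(* Defs.v *)
From Stdlib Require Import Reals List Relations.
Import ListNotations.
Open Scope R_scope.

Section G.
Variable V : Type.
Variable adj : V -> V -> Prop.

Definition simple_graph : Prop :=
  (forall x y, adj x y -> adj y x) /\ (forall x, ~ adj x x).

Definition infinite_graph : Prop := ~ exists l : list V, forall v, In v l.

Definition connected_graph : Prop := forall u v, clos_refl_trans V adj u v.

Definition bounded_degree : Prop :=
  exists D : nat, forall v (l : list V), NoDup l ->
    (forall y, In y l -> adj v y) -> (length l <= D)%nat.

(* finite vertex sets are duplicate-free lists; the set A_G *)
Definition induced_connected (W : list V) : Prop :=
  forall u v, In u W -> In v W ->
    clos_refl_trans V (fun x y => In x W /\ In y W /\ adj x y) u v.

Definition in_AG (W : list V) : Prop :=
  NoDup W /\ W <> [] /\ induced_connected W.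

(* |∂_e W| = n : edges {x,y} with x in W, y not in W, counted through the
   oriented pair (x,y) (bijective with the undirected boundary edges) *)
Definition edge_boundary_size (W : list V) (n : nat) : Prop :=
  exists l : list (V * V), NoDup l /\
    (forall p, In p l <-> (In (fst p) W /\ ~ In (snd p) W /\ adj (fst p) (snd p))) /\
    length l = n.

Definition ext_boundary (W : list V) (x : V) : Prop :=
  ~ In x W /\ exists w, In w W /\ adj w x.

(* a finite subgraph given by a vertex list S and an edge list F, each
   undirected edge listed once as an ordered pair *)
Definition Fedge (F : list (V * V)) (x y : V) : Prop := In (x, y) F \/ In (y, x) F.

Fixpoint chain (F : list (V * V)) (x : V) (l : list V) : Prop :=
  match l with
  | [] => True
  | y :: l' => Fedge F x y /\ chain F y l'
  end.

Definition has_cycle (F : list (V * V)) : Prop :=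
  exists x l, NoDup (x :: l) /\ (2 <= length l)%nat /\ chain F x l /\
    Fedge F (last l x) x.

Definition is_subgraph_edges (S : list V) (F : list (V * V)) : Prop :=
  NoDup S /\ NoDup F /\
  (forall x y, In (x, y) F -> ~ In (y, x) F) /\
  (forall x y, In (x, y) F -> adj x y /\ In x S /\ In y S).

Definition is_tree (S : list V) (F : list (V * V)) : Prop :=
  is_subgraph_edges S F /\ S <> [] /\
  (forall u v, In u S -> In v S -> clos_refl_trans V (Fedge F) u v) /\
  ~ has_cycle F.

(* tree subgraph of (W ∪ ∂ext W, E[W] ∪ ∂_e W) whose edge set contains ∂_e W *)
Definition contour_tree (W : list V) (S : list V) (F : list (V * V)) : Prop :=
  is_tree S F /\
  (forall x, In x S -> In x W \/ ext_boundary W x) /\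
  (forall x y, In (x, y) F -> In x W \/ In y W) /\
  (forall x y, In x W -> ~ In y W -> adj x y -> Fedge F x y).

Definition contour_size (W : list V) (d : nat) : Prop :=
  (exists S F, contour_tree W S F /\ length F = d) /\
  (forall S F, contour_tree W S F -> (d <= length F)%nat).

Definition cheeger_ratio (r : R) : Prop :=
  exists W b, in_AG W /\ edge_boundary_size W b /\ r = INR b / INR (length W).

Definition contour_ratio (r : R) : Prop :=
  exists W b d, in_AG W /\ edge_boundary_size W b /\ contour_size W d /\
    r = INR b / INR d.

End G.

Definition is_inf (P : R -> Prop) (m : R) : Prop :=
  (forall r, P r -> m <= r) /\ (forall m', (forall r, P r -> m' <= r) -> m' <= m).

Definition cheeger_constant (V : Type) (adj : V -> V -> Prop) (C : R) : Prop :=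
  is_inf (cheeger_ratio V adj) C.
Definition contour_constant (V : Type) (adj : V -> V -> Prop) (Rc : R) : Prop :=
  is_inf (contour_ratio V adj) Rc.

(* Main.v *)
Require Import Defs.
From Stdlib Require Import Reals List Relations.
From Stdlib Require Import Lra Lia ClassicalEpsilon Classical Wf_nat.
Import ListNotations.
Open Scope R_scope.

Definition dec (P : Prop) : bool := if excluded_middle_informative P then true else false.
Lemma decP (P : Prop) : dec P = true <-> P.
Proof. unfold dec; destruct (excluded_middle_informative P); split; intros; auto; try discriminate; contradiction. Qed.
Lemma decF (P : Prop) : dec P = false <-> ~ P.
Proof. unfold dec; destruct (excluded_middle_informative P); split; intros; auto; try discriminate; contradiction. Qed.

Lemma Fedge_mono V F F' x y : incl F F' -> Fedge V F x y -> Fedge V F' x y.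
Proof. unfold Fedge; intros H [h|h]; [left|right]; apply H; auto. Qed.

Lemma Fedge_sym V F x y : Fedge V F x y -> Fedge V F y x.
Proof. unfold Fedge; tauto. Qed.

Lemma chain_mono V F F' x l : incl F F' -> chain V F x l -> chain V F' x l.
Proof. intros H; revert x; induction l; simpl; auto. intros x [h1 h2]; split; eauto using Fedge_mono. Qed.

Lemma cycle_mono V F F' : incl F F' -> has_cycle V F -> has_cycle V F'.
Proof.
  intros H [x [l [h1 [h2 [h3 h4]]]]]. exists x, l; repeat split; eauto using chain_mono, Fedge_mono.
Qed.

Lemma chain_prefix V F x l1 l2 : chain V F x (l1 ++ l2) -> chain V F x l1.
Proof. revert x; induction l1; simpl; auto. intros x [h1 h2]; split; auto. Qed.

Lemma mk_cycle V E v a l1 w l2 : NoDup (v :: a :: l1 ++ w :: l2) ->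
  chain V E v (a :: l1 ++ w :: l2) -> Fedge V E v w -> has_cycle V E.
Proof.
  intros Hnd Hch Hf. exists v, (a :: l1 ++ [w]).
  assert (Heq : v :: a :: l1 ++ w :: l2 = (v :: a :: l1 ++ [w]) ++ l2)
    by (simpl; rewrite <- app_assoc; reflexivity).
  split; [rewrite Heq in Hnd; exact (NoDup_app_remove_r _ _ Hnd)|].
  split; [simpl; rewrite length_app; simpl; lia|].
  split.
  - assert (Heq2 : a :: l1 ++ w :: l2 = (a :: l1 ++ [w]) ++ l2)
      by (simpl; rewrite <- app_assoc; reflexivity).
    rewrite Heq2 in Hch. exact (chain_prefix _ _ _ _ _ Hch).
  - change (a :: l1 ++ [w]) with ((a :: l1) ++ [w]). rewrite last_last.
    apply Fedge_sym; auto.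
Qed.

Lemma leaf_exists V (W : list V) (E : list (V*V)) :
  (forall x y, In (x,y) E -> In x W /\ In y W) ->
  (forall x y, In (x,y) E -> x <> y) ->
  ~ has_cycle V E ->
  forall n (q : list V) v, (length W <= n + length (v::q))%nat -> NoDup (v::q) ->
    chain V E v q -> In v W -> (forall z, In z q -> In z W) ->
  exists w, In w W /\ forall u u', Fedge V E w u -> Fedge V E w u' -> u = u'.
Proof.
  intros Hend Hloop Hac n. induction n as [n IH] using lt_wf_ind.
  intros q v Hlen Hnd Hch Hv Hq.
  destruct (classic (forall u u', Fedge V E v u -> Fedge V E v u' -> u = u')) as [Hl|Hnl].
  { exists v; auto. }
  apply not_all_ex_not in Hnl as [u Hnl]; apply not_all_ex_not in Hnl as [u' Hnl].
  apply imply_to_and in Hnl as [Hu Hnl]; apply imply_to_and in Hnl as [Hu' Hne].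
  assert (HW : forall z, Fedge V E v z -> In z W).
  { intros z [h|h]; apply Hend in h; tauto. }
  assert (Hnv : forall z, Fedge V E v z -> z <> v).
  { intros z [h|h]; apply Hloop in h; auto. }
  assert (Hext : forall z, Fedge V E v z -> ~ In z (v :: q) ->
     exists w, In w W /\ forall u u', Fedge V E w u -> Fedge V E w u' -> u = u').
  { intros z Hz Hnz.
    assert (Hnd2 : NoDup (z :: v :: q)) by (constructor; auto).
    assert (Hle : (length (z :: v :: q) <= length W)%nat).
    { apply NoDup_incl_length; auto. intros t [<-|[<-|ht]]; auto. }
    apply (IH (n - 1)%nat ltac:(simpl in *; lia) (v :: q) z); [simpl in *; lia | auto | | | ].
    - simpl; split; auto. apply Fedge_sym; auto.
    - apply HW; auto.
    - intros t [<-|ht]; auto. }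
  destruct (classic (In u (v :: q))) as [Hiu|Hiu]; [|apply (Hext u); auto].
  destruct (classic (In u' (v :: q))) as [Hiu'|Hiu']; [|apply (Hext u'); auto].
  exfalso. apply Hac.
  destruct q as [|a q'].
  { destruct Hiu as [Hiu|[]]. exfalso; apply (Hnv u); auto. }
  assert (Hpick : exists w, Fedge V E v w /\ In w q' /\ w <> a).
  { destruct Hiu as [Hiu|Hiu]; [exfalso; apply (Hnv u); auto|].
    destruct Hiu' as [Hiu'|Hiu']; [exfalso; apply (Hnv u'); auto|].
    destruct (classic (u = a)) as [Ha|Ha].
    - exists u'; split; auto. destruct Hiu' as [Hiu'|Hiu']; [congruence|]. split; auto. congruence.
    - exists u; split; auto. destruct Hiu as [Hiu|Hiu]; [congruence|]. auto. }
  destruct Hpick as [w [Hw [Hwq _]]].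
  apply in_split in Hwq as [l1 [l2 ->]].
  apply (mk_cycle V E v a l1 w l2); auto.
Qed.

Lemma filter_split {A} (f : A -> bool) l :
  length l = (length (filter f l) + length (filter (fun x => negb (f x)) l))%nat.
Proof. induction l; simpl; auto. destruct (f a); simpl; lia. Qed.

Lemma forest_bound V : forall n (W : list V) (E : list (V*V)), length W = n -> NoDup W ->
  (forall x y, In (x,y) E -> In x W /\ In y W) ->
  (forall x y, In (x,y) E -> x <> y) -> NoDup E ->
  (forall x y, In (x,y) E -> ~ In (y,x) E) -> ~ has_cycle V E ->
  (length E <= length W)%nat.
Proof.
  induction n as [|n IH]; intros W E Hlen HndW Hend Hloop HndE Hnr Hac.
  - destruct W; [|discriminate]. destruct E as [|[x y] E]; simpl; [lia|].
    destruct (Hend x y (or_introl eq_refl)) as [[] _].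
  - destruct E as [|[x y] E0] eqn:HE; [simpl; lia|]. rewrite <- HE in *.
    assert (Hx : In x W) by (apply (Hend x y); rewrite HE; left; auto).
    assert (Hnx : NoDup [x]) by (constructor; [simpl; auto|constructor]).
    assert (Hlx : (length W <= length W + length [x])%nat) by (simpl; lia).
    assert (Hqx : forall z, In z (@nil V) -> In z W) by (simpl; tauto).
    destruct (leaf_exists V W E Hend Hloop Hac (length W) [] x Hlx Hnx I Hx Hqx) as [w [Hw Hleaf]].
    apply in_split in Hw as [W1 [W2 HWe]].
    set (inc := fun e : V * V => dec (fst e = w \/ snd e = w)).
    rewrite (filter_split inc E).
    assert (H1 : (length (filter inc E) <= 1)%nat).
    { assert (HndL := NoDup_filter inc HndE).
      assert (Hin : forall e, In e (filter inc E) -> In e E /\ (fst e = w \/ snd e = w)).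
      { intros e He. apply filter_In in He as [h1 h2]. apply (proj1 (decP _)) in h2. split; [exact h1|exact h2]. }
      destruct (filter inc E) as [|a [|b L]] eqn:HL; simpl; try lia.
      exfalso. inversion HndL as [|? ? Hnab Hnd']; subst.
      destruct (Hin a (or_introl eq_refl)) as [Ha Hai].
      destruct (Hin b (or_intror (or_introl eq_refl))) as [Hb Hbi].
      destruct a as [a1 a2], b as [b1 b2]; simpl in *.
      apply Hnab; left.
      destruct Hai as [<-|<-], Hbi as [<-|<-].
      + f_equal. apply Hleaf; left; auto.
      + assert (a2 = b1) by (apply Hleaf; [left|right]; auto). subst.
        exfalso; apply (Hnr _ _ Ha Hb).
      + assert (a1 = b2) by (apply Hleaf; [right|left]; auto). subst.
        exfalso; apply (Hnr _ _ Ha Hb).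
      + f_equal. apply Hleaf; right; auto. }
    assert (H2 : (length (filter (fun e => negb (inc e)) E) <= length (W1 ++ W2))%nat).
    { assert (Hf : forall e, In e (filter (fun e => negb (inc e)) E) <->
                     In e E /\ fst e <> w /\ snd e <> w).
      { intros e; rewrite filter_In. unfold inc.
        destruct (dec (fst e = w \/ snd e = w)) eqn:Hd; simpl.
        - apply (proj1 (decP _)) in Hd. split; [intros [_ h]; discriminate|tauto].
        - apply (proj1 (decF _)) in Hd. tauto. }
      apply (IH (W1 ++ W2)).
      - subst W. rewrite length_app in *; simpl in *; lia.
      - subst W; eapply NoDup_remove_1; eauto.
      - intros a b Hab. apply Hf in Hab as [Hab [Ha Hb]]; simpl in *.
        destruct (Hend a b Hab) as [Ha' Hb']. subst W.
        rewrite !in_app_iff in *; simpl in *.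
        split; [destruct Ha' as [h|[h|h]]; [left|exfalso; congruence|right]; auto
               |destruct Hb' as [h|[h|h]]; [left|exfalso; congruence|right]; auto].
      - intros a b Hab. apply Hf in Hab; apply Hloop; tauto.
      - apply NoDup_filter; auto.
      - intros a b Hab Hba. apply Hf in Hab; apply Hf in Hba. apply (Hnr a b); tauto.
      - intro Hc; apply Hac. revert Hc; apply cycle_mono. intros e He; apply Hf in He; tauto. }
    subst W. rewrite length_app in *; simpl. lia.
Qed.

Lemma NoDup_map_on {A B} (f : A -> B) l : NoDup l ->
  (forall x y, In x l -> In y l -> f x = f y -> x = y) -> NoDup (map f l).
Proof.
  induction l as [|a l IH]; simpl; intros Hnd Hinj; constructor.
  - inversion Hnd; subst. intro Hm. apply in_map_iff in Hm as [x [Hx Hxl]].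
    assert (x = a) by (apply Hinj; auto). subst; contradiction.
  - inversion Hnd; subst. apply IH; auto.
Qed.

Lemma key V adj W b S F : simple_graph V adj -> NoDup W -> edge_boundary_size V adj W b ->
  contour_tree V adj W S F -> (length F <= b + length W)%nat.
Proof.
  intros [Hsym Hirr] HndW [l [Hndl [Hl Hlen]]]
    [[[HndS [HndF [Hnrev Hsub]]] [_ [_ Hacyc]]] [_ [Hone _]]].
  set (P := fun e : V * V => dec (In (fst e) W /\ In (snd e) W)).
  rewrite (filter_split P F).
  assert (HP : forall e, In e (filter P F) <-> In e F /\ In (fst e) W /\ In (snd e) W).
  { intros e; rewrite filter_In; unfold P. rewrite decP; tauto. }
  assert (HnP : forall e, In e (filter (fun e => negb (P e)) F) <->
                  In e F /\ ~ (In (fst e) W /\ In (snd e) W)).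
  { intros e; rewrite filter_In; unfold P.
    destruct (dec (In (fst e) W /\ In (snd e) W)) eqn:Hd; simpl.
    - apply (proj1 (decP _)) in Hd; split; [intros [_ h]; discriminate|tauto].
    - apply (proj1 (decF _)) in Hd; tauto. }
  assert (H1 : (length (filter P F) <= length W)%nat).
  { apply (forest_bound V (length W)); auto.
    - intros x y Hxy; apply HP in Hxy; simpl in *; tauto.
    - intros x y Hxy Heq; apply HP in Hxy as [Hxy _]. subst.
      apply (Hirr y). apply (Hsub y y Hxy).
    - apply NoDup_filter; auto.
    - intros x y Hxy Hyx; apply HP in Hxy; apply HP in Hyx. apply (Hnrev x y); tauto.
    - intro Hc; apply Hacyc. revert Hc; apply cycle_mono. intros e He; apply HP in He; tauto. }
  set (orient := fun e : V * V => if dec (In (fst e) W) then e else (snd e, fst e)).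
  assert (H2 : (length (filter (fun e => negb (P e)) F) <= b)%nat).
  { rewrite <- Hlen, <- (length_map orient).
    apply NoDup_incl_length.
    - apply NoDup_map_on; [apply NoDup_filter; auto|].
      intros [x y] [x' y'] Hxy Hxy'. apply HnP in Hxy; apply HnP in Hxy'; simpl in *.
      unfold orient; simpl.
      destruct (dec (In x W)) eqn:E1; destruct (dec (In x' W)) eqn:E2; intro Heq; auto.
      + injection Heq as h1 h2; subst; exfalso;
        first [eapply Hnrev; [apply Hxy|apply Hxy'] | eapply Hnrev; [apply Hxy'|apply Hxy]].
      + injection Heq as h1 h2; subst; exfalso;
        first [eapply Hnrev; [apply Hxy|apply Hxy'] | eapply Hnrev; [apply Hxy'|apply Hxy]].
      + injection Heq as h1 h2; subst; auto.
    - intros p Hp. apply in_map_iff in Hp as [[x y] [<- He]].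
      apply HnP in He as [He Hn]; simpl in *. apply Hl.
      destruct (Hsub x y He) as [Ha _].
      unfold orient; simpl. destruct (dec (In x W)) eqn:E1.
      + apply (proj1 (decP _)) in E1. simpl. repeat split; auto.
      + apply (proj1 (decF _)) in E1. simpl.
        destruct (Hone x y He) as [h|h]; [contradiction|]. repeat split; auto. }
  lia.
Qed.

Theorem mainTheorem10 (V : Type) (adj : V -> V -> Prop)
  (Hsimple : simple_graph V adj) (Hinf : infinite_graph V)
  (Hconn : connected_graph V adj) (Hdeg : bounded_degree V adj)
  (C Rg : R) (HC : cheeger_constant V adj C) (HR : contour_constant V adj Rg) :
  Rg >= C / (C + 1) /\ (C > 0 -> Rg > 0).
Proof.
  destruct HC as [HC1 HC2]. destruct HR as [HR1 HR2].
  assert (HC0 : 0 <= C).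
  { apply HC2. intros r [W [b [[_ [HWne _]] [_ ->]]]].
    destruct W as [|w W]; [congruence|]. simpl length.
    apply Rle_mult_inv_pos; [apply pos_INR|]. apply lt_0_INR; lia. }
  assert (Hmain : C / (C + 1) <= Rg).
  { apply HR2. intros r [W [b [d [HAG [Heb [[[S [F [Hct HFd]]] _] ->]]]]]].
    destruct HAG as [HndW [HWne HWc]] eqn:HAGe.
    assert (Hw : 0 < INR (length W)).
    { destruct W as [|w W]; [congruence|]. apply lt_0_INR; simpl; lia. }
    assert (HCw : C * INR (length W) <= INR b).
    { assert (h : C <= INR b / INR (length W)) by (apply HC1; exists W, b; split; [exact HAG|split; [exact Heb|reflexivity]]).
      apply (Rmult_le_compat_r (INR (length W))) in h; [|lra].
      replace (INR b / INR (length W) * INR (length W)) with (INR b) in h by (field; lra). exact h. }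
    assert (Hk := key V adj W b S F Hsimple HndW Heb Hct).
    destruct (Nat.eq_dec d 0) as [Hd0|Hd0].
    - subst d. destruct F; [|discriminate].
      assert (Hb0 : b = 0%nat).
      { destruct Heb as [l [_ [Hl Hlen]]]. destruct l as [|p l]; [simpl in Hlen; lia|].
        exfalso. destruct (proj1 (Hl p) (or_introl eq_refl)) as [h1 [h2 h3]].
        destruct Hct as [_ [_ [_ H4]]]. destruct (H4 _ _ h1 h2 h3) as [[]|[]]. }
      subst b. simpl INR in *.
      assert (C = 0) by nra. subst C. unfold Rdiv. rewrite !Rmult_0_l. lra.
    - assert (Hdpos : 0 < INR d) by (apply lt_0_INR; lia).
      assert (Hdle : INR d <= INR b + INR (length W)).
      { rewrite <- plus_INR. apply le_INR. lia. }
      apply (Rmult_le_reg_r (INR d * (C + 1))); [nra|].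
      replace (C / (C + 1) * (INR d * (C + 1))) with (C * INR d) by (field; lra).
      replace (INR b / INR d * (INR d * (C + 1))) with (INR b * (C + 1)) by (field; lra).
      nra. }
  split; [lra|].
  intro Hpos. assert (0 < C / (C + 1)) by (apply Rdiv_lt_0_compat; lra). lra.
Qed.
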